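(* Let $\alpha \in (0, \tfrac{1}{2}\pi)$ and put $\kappa = \sin \alpha$. Then $$\tfrac{1}{2} \pi \,_2F_1 (\tfrac{1}{3}, \tfrac{2}{3}; 1; \kappa^2) = \sqrt2 \int_0^{\alpha} \frac{\cos \frac{1}{3} \psi}{\sqrt{\cos 2 \psi - \cos 2 \alpha}}\, {\rm d} \psi.$$
   Context: $\,_2F_1$ denotes the Gauss hypergeometric function. *)

(* Defs.v *)
From Stdlib Require Import Reals Factorial.
From Coquelicot Require Import Coquelicot.
Open Scope R_scope.

Fixpoint pochhammer (a : R) (n : nat) : R :=
  match n with
  | O => 1
  | S m => pochhammer a m * (a + INR m)
  end.

Definition hyp2F1_term (a b c z : R) (n : nat) : R :=
  pochhammer a n * pochhammer b n / (pochhammer c n * INR (fact n)) * z ^ n.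

Definition hyp2F1 (a b c z : R) : R := Series (hyp2F1_term a b c z).

(* Main.v *)
Require Import Defs.
From Stdlib Require Import Reals.
From Coquelicot Require Import Coquelicot.
From Stdlib Require Import Lra Lia Factorial.
Open Scope R_scope.

Fixpoint acoef (k : nat) : R :=
  match k with
  | O => 1
  | S O => 0
  | S (S m as k1) => acoef m * (INR m + 2/3) * (INR m + 4/3) / ((INR m + 1) * (INR m + 2))
  end.

Lemma acoef_SS m : acoef (S (S m)) = acoef m * (INR m + 2/3) * (INR m + 4/3) / ((INR m + 1) * (INR m + 2)).
Proof. reflexivity. Qed.

Lemma acoef_bound k : 0 <= acoef k <= 1.
Proof.
  assert (H : forall j, (0 <= acoef j <= 1) /\ (0 <= acoef (S j) <= 1)).
  { clear k; intro k; induction k as [|k IH].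
    - simpl; lra.
    - split; [apply IH|]. destruct IH as [[H1 H2] _].
      rewrite acoef_SS. pose proof (pos_INR k) as Hk.
      assert (0 < (INR k + 1) * (INR k + 2)) by nra.
      split.
      + apply Rmult_le_pos; [|apply Rlt_le, Rinv_0_lt_compat; auto]. apply Rmult_le_pos; [apply Rmult_le_pos|]; lra.
      + apply (Rmult_le_reg_r ((INR k + 1) * (INR k + 2))); auto.
        unfold Rdiv. rewrite Rmult_assoc, Rinv_l by lra. rewrite Rmult_1_r, Rmult_1_l.
        apply Rmult_le_compat; try nra. }
  apply H.
Qed.

Lemma acoef_odd n : acoef (S (2 * n)) = 0.
Proof.
  induction n as [|n IH]; [reflexivity|].
  replace (S (2 * S n)) with (S (S (S (2 * n)))) by lia.
  rewrite acoef_SS, IH. unfold Rdiv. ring.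
Qed.

Lemma acoef_rec k :
  INR (S k) * (INR (S (S k)) * acoef (S (S k))) = (INR k + 2/3) * (INR k + 4/3) * acoef k.
Proof.
  rewrite acoef_SS, !S_INR. pose proof (pos_INR k).
  field. lra.
Qed.

Lemma acoef_radius x : Rabs x < 1 -> Rbar_lt (Rabs x) (CV_radius acoef).
Proof.
  intros Hx.
  set (r := (1 + Rabs x) / 2).
  assert (Hr0 : 0 <= r) by (unfold r; pose proof (Rabs_pos x); lra).
  assert (Hr1 : r < 1) by (unfold r; lra).
  assert (Hd : CV_disk acoef r).
  { unfold CV_disk. apply (@ex_series_le R_AbsRing R_CompleteNormedModule _ (fun n => r ^ n)).
    - intros n. change norm with Rabs. rewrite Rabs_Rabsolu, Rabs_mult.
      rewrite <- RPow_abs, (Rabs_pos_eq r Hr0). pose proof (acoef_bound n).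
      rewrite Rabs_pos_eq by lra.
      pose proof (pow_le r n Hr0). nra.
    - eexists. apply is_series_geom. rewrite Rabs_pos_eq; lra. }
  destruct (Lub_Rbar_correct (CV_disk acoef)) as [Hub _].
  specialize (Hub r Hd). fold (CV_radius acoef) in Hub.
  destruct (CV_radius acoef) as [c| |]; simpl in *; auto. unfold r in Hub; lra.
Qed.

Lemma exR_plus a b : ex_series a -> ex_series b -> ex_series (fun n => a n + b n).
Proof. intros Ha Hb. exact (@ex_series_plus R_AbsRing R_NormedModule a b Ha Hb). Qed.
Lemma exR_scal c a : ex_series a -> ex_series (fun n => c * a n).
Proof. intros Ha. exact (@ex_series_scal_l R_AbsRing R_NormedModule c a Ha). Qed.

Definition Fs x := PSeries acoef x.
Definition F1 x := PSeries (PS_derive acoef) x.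
Definition F2 x := PSeries (PS_derive (PS_derive acoef)) x.

Lemma ex_ps a x : Rbar_lt (Rabs x) (CV_radius a) -> ex_series (fun k => a k * x ^ k).
Proof. intros H. apply ex_series_Rabs. apply CV_disk_inside; auto. Qed.

Lemma INR_pred k : INR k * INR (pred k) = INR k * (INR k - 1).
Proof. destruct k; simpl pred. simpl; ring. rewrite S_INR; ring. Qed.

Lemma ode x : Rabs x < 1 -> (1 - x ^ 2) * F2 x - 3 * x * F1 x - 8/9 * Fs x = 0.
Proof.
  intros Hx.
  pose proof (acoef_radius x Hx) as R0.
  assert (R1 : Rbar_lt (Rabs x) (CV_radius (PS_derive acoef))) by (rewrite CV_radius_derive; auto).
  assert (R2 : Rbar_lt (Rabs x) (CV_radius (PS_derive (PS_derive acoef)))) by (rewrite !CV_radius_derive; auto).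
  set (d2 := fun k => PS_derive (PS_derive acoef) k * x ^ k).
  set (d1 := fun k => PS_derive acoef k * x ^ k).
  set (d0 := fun k => acoef k * x ^ k).
  assert (E2 : ex_series d2) by (apply ex_ps; auto).
  assert (E1 : ex_series d1) by (apply ex_ps; auto).
  assert (E0 : ex_series d0) by (apply ex_ps; auto).
  set (v := fun k => INR k * INR (pred k) * acoef k * x ^ k).
  set (w := fun k => INR k * acoef k * x ^ k).
  assert (Hv2 : forall k, v (2 + k)%nat = x ^ 2 * d2 k).
  { intros k. unfold v, d2, PS_derive. simpl pred. replace (2 + k)%nat with (S (S k)) by lia.
    simpl pow. ring. }
  assert (Hw1 : forall k, w (1 + k)%nat = x * d1 k).
  { intros k. unfold w, d1, PS_derive. replace (1 + k)%nat with (S k) by lia.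
    simpl pow. ring. }
  assert (Ev : ex_series v).
  { apply (ex_series_incr_n v 2). apply (ex_series_ext (fun k => x ^ 2 * d2 k)).
    intros; rewrite Hv2; auto. apply exR_scal; auto. }
  assert (Ew : ex_series w).
  { apply (ex_series_incr_n w 1). apply (ex_series_ext (fun k => x * d1 k)).
    intros; rewrite Hw1; auto. apply exR_scal; auto. }
  assert (Sv : Series v = x ^ 2 * F2 x).
  { rewrite (Series_incr_n v 2) by (auto; lia).
    rewrite (Series_ext _ (fun k => x ^ 2 * d2 k)) by (intros; apply Hv2).
    rewrite Series_scal_l. unfold F2, PSeries. fold d2. unfold v; simpl. ring. }
  assert (Sw : Series w = x * F1 x).
  { rewrite (Series_incr_n w 1) by (auto; lia).
    rewrite (Series_ext _ (fun k => x * d1 k)) by (intros; apply Hw1).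
    rewrite Series_scal_l. unfold F1, PSeries. fold d1. unfold w; simpl. ring. }
  assert (Z : Series (fun k => d2 k + (-1) * v k + (-3) * w k + (-8/9) * d0 k) = 0).
  { rewrite (Series_ext _ (fun k => 0 * 0)).
    - rewrite Series_scal_l. ring.
    - intros k. unfold d2, v, w, d0. unfold PS_derive at 1.
      rewrite acoef_rec. rewrite INR_pred. clear -k. field. }
  rewrite !Series_plus, !Series_scal_l in Z;
    repeat first [apply exR_plus | apply exR_scal | assumption].
  rewrite Sv, Sw in Z. unfold F2, F1, Fs, PSeries. fold d2 d1 d0. unfold F2, F1, PSeries in Z. fold d2 d1 in Z.
  lra.
Qed.

Lemma dFs x : Rabs x < 1 -> is_derive Fs x (F1 x).
Proof. intros H. apply is_derive_PSeries. apply acoef_radius; auto. Qed.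
Lemma dF1 x : Rabs x < 1 -> is_derive F1 x (F2 x).
Proof. intros H. unfold F1, F2. apply is_derive_PSeries. rewrite CV_radius_derive. apply acoef_radius; auto. Qed.

Lemma sin_lt1 t : - (PI/2) < t < PI/2 -> Rabs (sin t) < 1.
Proof.
  intros Ht. pose proof PI_RGT_0.
  assert (sin t < 1). { rewrite <- sin_PI2. apply sin_increasing_1; lra. }
  assert (-1 < sin t). { replace (-1) with (sin (-(PI/2))) by (rewrite sin_neg, sin_PI2; ring). apply sin_increasing_1; lra. }
  apply Rabs_def1; lra.
Qed.

Definition G t := Fs (sin t) * cos t.
Definition G1 t := F1 (sin t) * cos t * cos t - Fs (sin t) * sin t.
Definition G2 t := F2 (sin t) * cos t * cos t * cos t - 3 * F1 (sin t) * sin t * cos t - Fs (sin t) * cos t.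

Lemma dG t : - (PI/2) < t < PI/2 -> is_derive G t (G1 t).
Proof.
  intros Ht. pose proof (sin_lt1 t Ht) as Hs.
  unfold G, G1. auto_derive.
  - exists (F1 (sin t)). apply dFs; auto.
  - replace (Derive (fun x : R => Fs x) _) with (F1 (sin t)) by (symmetry; apply is_derive_unique; apply dFs; auto). ring.
Qed.

Lemma dG1 t : - (PI/2) < t < PI/2 -> is_derive G1 t (G2 t).
Proof.
  intros Ht. pose proof (sin_lt1 t Ht) as Hs.
  unfold G1, G2. auto_derive.
  - repeat split; first [ exists (F1 (sin t)); apply dFs; auto | exists (F2 (sin t)); apply dF1; auto ].
  - replace (Derive (fun x : R => Fs x) _) with (F1 (sin t)) by (symmetry; apply is_derive_unique; apply dFs; auto).
    replace (Derive (fun x : R => F1 x) _) with (F2 (sin t)) by (symmetry; apply is_derive_unique; apply dF1; auto). ring.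
Qed.

Lemma G2_eq t : - (PI/2) < t < PI/2 -> G2 t = - G t / 9.
Proof.
  intros Ht. pose proof (ode _ (sin_lt1 t Ht)) as H.
  assert (Hc: 1 - sin t ^ 2 = cos t * cos t) by (pose proof (sin2_cos2 t); unfold Rsqr in *; nra).
  unfold G2, G.
  replace (F2 (sin t) * cos t * cos t * cos t - 3 * F1 (sin t) * sin t * cos t - Fs (sin t) * cos t)
    with (cos t * ((1 - sin t ^ 2) * F2 (sin t) - 3 * sin t * F1 (sin t) - 8 / 9 * Fs (sin t)) - cos t * Fs (sin t) / 9).
  - rewrite H. field.
  - rewrite Hc. field.
Qed.

Definition Dd t := G t - cos (t / 3).
Definition Dd1 t := G1 t + sin (t / 3) / 3.
Definition En t := Dd1 t ^ 2 + Dd t ^ 2 / 9.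
Definition dE t := 2 * Dd1 t * (G2 t + cos (t / 3) / 9) + 2 / 9 * Dd t * Dd1 t.

Lemma dE_is t : - (PI/2) < t < PI/2 -> is_derive En t (dE t).
Proof.
  intros Ht.
  unfold En, dE, Dd, Dd1. auto_derive.
  - repeat split; first [ exists (G1 t); apply dG; auto | exists (G2 t); apply dG1; auto ].
  - replace (Derive (fun x : R => G x) _) with (G1 t) by (symmetry; apply is_derive_unique; apply dG; auto).
    replace (Derive (fun x : R => G1 x) _) with (G2 t) by (symmetry; apply is_derive_unique; apply dG1; auto). unfold Rdiv. field.
Qed.

Lemma dE_0 t : - (PI/2) < t < PI/2 -> dE t = 0.
Proof. intros Ht. unfold dE, Dd. rewrite G2_eq by auto. field. Qed.

Lemma abs_range c t : - (PI/2) < t < PI/2 -> Rabs c <= Rabs t -> - (PI/2) < c < PI/2.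
Proof.
  intros Ht Hc. assert (Rabs t < PI/2) by (apply Rabs_def1; lra).
  assert (Rabs c < PI/2) by lra. apply Rabs_def2 in H0. lra.
Qed.

Lemma G_cos t : - (PI/2) < t < PI/2 -> Fs (sin t) * cos t = cos (t / 3).
Proof.
  intros Ht.
  destruct (MVT_cor4 En dE 0 (Rabs t)) with (b := t) as [c [Hc1 Hc2]].
  - intros c Hc. apply dE_is. rewrite Rminus_0_r in Hc. apply (abs_range c t); auto.
  - rewrite Rminus_0_r; lra.
  - rewrite !Rminus_0_r in Hc2. rewrite dE_0 in Hc1 by (apply (abs_range c t); auto).
    assert (HE0 : En 0 = 0).
    { unfold En, Dd, Dd1, G, G1. rewrite sin_0, cos_0. unfold Rdiv. rewrite Rmult_0_l, sin_0, cos_0.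
      unfold Fs. rewrite PSeries_0. simpl. unfold F1. rewrite PSeries_0. unfold PS_derive. simpl. ring. }
    assert (HEt : En t = 0) by lra.
    unfold En in HEt. assert (Dd t = 0) by nra. unfold Dd, G in H. lra.
Qed.

Definition W k := RInt (fun t => sin t ^ k) 0 (PI / 2).

Lemma ex_RInt_sinpow k a b : ex_RInt (fun t => sin t ^ k) a b.
Proof. apply (@ex_RInt_continuous R_CompleteNormedModule). intros z _. apply (@ex_derive_continuous R_AbsRing R_NormedModule). auto_derive. auto. Qed.

Definition phiW k t := - cos t * sin t ^ (S k).

Lemma W_rec k : INR (S (S k)) * W (S (S k)) = INR (S k) * W k.
Proof.
  assert (H : is_RInt (fun t => INR (S (S k)) * sin t ^ (S (S k)) - INR (S k) * sin t ^ k) 0 (PI/2)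
      (minus (phiW k (PI/2)) (phiW k 0))).
  { apply (@is_RInt_derive R_CompleteNormedModule).
    - intros x _. unfold phiW. auto_derive; auto.
      change (match k with 0%nat => 1 | S _ => INR k + 1 end) with (INR (S k)).
      assert (Hc: cos x * cos x = 1 - sin x * sin x) by (pose proof (sin2_cos2 x); unfold Rsqr in *; lra).
      transitivity (sin x * sin x * sin x ^ k - (cos x * cos x) * INR (S k) * sin x ^ k); [ring|].
      rewrite Hc. simpl pow. rewrite !S_INR. ring.
    - intros x _. apply (@ex_derive_continuous R_AbsRing R_NormedModule). auto_derive. auto. }
  unfold phiW in H. rewrite cos_PI2, cos_0, sin_0 in H.
  apply (@is_RInt_unique R_CompleteNormedModule) in H.
  replace (minus (- 0 * sin (PI / 2) ^ S k) (- (1) * 0 ^ S k)) with 0 in H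
    by (simpl; unfold minus, plus, opp; simpl; ring).
  assert (HA : is_RInt (fun t => sin t ^ (S (S k))) 0 (PI/2) (W (S (S k))))
    by (apply (@RInt_correct R_CompleteNormedModule); apply ex_RInt_sinpow).
  assert (HB : is_RInt (fun t => sin t ^ k) 0 (PI/2) (W k))
    by (apply (@RInt_correct R_CompleteNormedModule); apply ex_RInt_sinpow).
  pose proof (is_RInt_minus _ _ _ _ _ _ (is_RInt_scal _ _ _ (INR (S (S k))) _ HA) (is_RInt_scal _ _ _ (INR (S k)) _ HB)) as HC.
  apply (is_RInt_ext _ (fun t => INR (S (S k)) * sin t ^ S (S k) - INR (S k) * sin t ^ k)) in HC;
    [| intros; unfold minus, plus, opp, scal; simpl; unfold mult; simpl; ring].
  apply (@is_RInt_unique R_CompleteNormedModule) in HC.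
  rewrite H in HC. unfold minus, plus, opp, scal in HC; simpl in HC. unfold mult in HC; simpl in HC.
  change (INR (S (S k))) with (INR (S k) + 1). change (INR (S k)) with (match k with 0%nat => 1 | S _ => INR k + 1 end). lra.
Qed.

Lemma W_0 : W 0 = PI / 2.
Proof.
  unfold W. simpl. rewrite RInt_const. unfold scal; simpl. unfold mult; simpl. ring.
Qed.

Lemma poch1 n : pochhammer 1 n = INR (fact n).
Proof.
  induction n as [|n IH]; [reflexivity|].
  simpl pochhammer. rewrite IH. rewrite fact_simpl, mult_INR, S_INR. ring.
Qed.

Lemma hterm_S n z : hyp2F1_term (1/3) (2/3) 1 z (S n) =
  hyp2F1_term (1/3) (2/3) 1 z n * ((1/3 + INR n) * (2/3 + INR n) / ((INR n + 1) * (INR n + 1))) * z.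
Proof.
  unfold hyp2F1_term. rewrite !poch1. simpl pochhammer. rewrite fact_simpl, mult_INR, S_INR.
  pose proof (INR_fact_neq_0 n). pose proof (pos_INR n).
  simpl pow. field. lra.
Qed.

Definition ucoef k0 k := acoef k * k0 ^ k * W k.

Lemma W_SS m : W (S (S m)) = INR (S m) / INR (S (S m)) * W m.
Proof.
  pose proof (W_rec m). assert (0 < INR (S (S m))) by (apply lt_0_INR; lia).
  apply (Rmult_eq_reg_l (INR (S (S m)))); [|lra]. rewrite H. field. lra.
Qed.

Lemma ucoef_even k0 n : ucoef k0 (2 * n) = PI / 2 * hyp2F1_term (1/3) (2/3) 1 (k0 ^ 2) n.
Proof.
  induction n as [|n IH].
  - unfold ucoef, hyp2F1_term. simpl. rewrite W_0. field.
  - replace (2 * S n)%nat with (S (S (2 * n))) by lia.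
    rewrite hterm_S, <- Rmult_assoc, <- Rmult_assoc, <- IH.
    unfold ucoef. rewrite acoef_SS, W_SS. rewrite !S_INR, mult_INR.
    simpl pow. pose proof (pos_INR n). simpl INR. field. lra.
Qed.

Lemma ucoef_odd k0 n : ucoef k0 (S (2 * n)) = 0.
Proof. unfold ucoef. rewrite acoef_odd. ring. Qed.

Lemma series_conv k0 L : is_series (ucoef k0) L ->
  PI / 2 * hyp2F1 (1/3) (2/3) 1 (k0 ^ 2) = L.
Proof.
  intros H.
  assert (Hsum : forall n, sum_n (ucoef k0) (2 * n) = sum_n (fun m => ucoef k0 (2 * m)) n).
  { induction n as [|n IH]; [reflexivity|].
    replace (2 * S n)%nat with (S (S (2 * n))) by lia.
    rewrite !sum_Sn, IH. rewrite ucoef_odd. replace (S (S (2 * n))) with (2 * S n)%nat by lia.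
    unfold plus; simpl. ring. }
  assert (Hv : is_series (fun m => ucoef k0 (2 * m)) L).
  { unfold is_series. eapply filterlim_ext. apply Hsum.
    apply (filterlim_comp _ _ _ (fun n => 2 * n)%nat (sum_n (ucoef k0)) eventually eventually).
    - intros P [N HN]. exists N. intros n Hn. apply HN. lia.
    - apply H. }
  assert (Hh : is_series (hyp2F1_term (1/3) (2/3) 1 (k0 ^ 2)) (2 / PI * L)).
  { apply (is_series_ext (fun m => scal (2 / PI) (ucoef k0 (2 * m)))).
    - intros n. rewrite ucoef_even. unfold scal; simpl; unfold mult; simpl. field. apply PI_neq0.
    - exact (@is_series_scal R_AbsRing R_NormedModule (2/PI) _ L Hv). }
  unfold hyp2F1. rewrite (is_series_unique _ _ Hh). field. apply PI_neq0.
Qed.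

Lemma tail_bound k0 y N : 0 <= k0 < 1 -> Rabs y <= k0 ->
  Rabs (Fs y - sum_n (fun k => acoef k * y ^ k) N) <= k0 ^ (S N) / (1 - k0).
Proof.
  intros Hk Hy.
  assert (Hy1 : Rabs y < 1) by lra.
  set (d := fun k => acoef k * y ^ k).
  assert (Ed : ex_series d) by (apply ex_ps; apply acoef_radius; auto).
  assert (Eg : is_series (fun k => k0 ^ k) (/ (1 - k0))) by (apply is_series_geom; rewrite Rabs_pos_eq; lra).
  assert (Eg2 : ex_series (fun k => k0 ^ S N * k0 ^ k)) by (apply exR_scal; eexists; eauto).
  assert (Hb : forall k, 0 <= Rabs (d (S N + k)%nat) <= k0 ^ S N * k0 ^ k).
  { intros k. split; [apply Rabs_pos|]. unfold d. rewrite Rabs_mult, <- RPow_abs, <- pow_add.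
    pose proof (acoef_bound (S N + k)). rewrite (Rabs_pos_eq (acoef _)) by lra.
    assert (Rabs y ^ (S N + k) <= k0 ^ (S N + k)) by (apply pow_incr; split; [apply Rabs_pos|auto]).
    pose proof (pow_le (Rabs y) (S N + k) (Rabs_pos y)). nra. }
  assert (Et : ex_series (fun k => Rabs (d (S N + k)%nat))).
  { apply (@ex_series_le R_AbsRing R_CompleteNormedModule _ (fun k => k0 ^ S N * k0 ^ k)); auto.
    intros k. change norm with Rabs. rewrite Rabs_Rabsolu. apply Hb. }
  unfold Fs, PSeries. fold d. rewrite (Series_incr_n d (S N)) by (auto; lia).
  rewrite sum_n_Reals. simpl pred.
  replace (sum_f_R0 d N + Series (fun k => d (S N + k)%nat) - sum_f_R0 d N) with (Series (fun k => d (S N + k)%nat)) by ring.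
  eapply Rle_trans. apply Series_Rabs; auto.
  eapply Rle_trans. apply Series_le; [apply Hb| auto].
  rewrite Series_scal_l. rewrite (is_series_unique (pow k0) _ Eg). unfold Rdiv. lra.
Qed.

Definition hS k0 t := Fs (k0 * sin t).

Lemma abs_ksin k0 t : 0 <= k0 -> Rabs (k0 * sin t) <= k0.
Proof.
  intros H. rewrite Rabs_mult, Rabs_pos_eq by auto. pose proof (Rabs_le (sin t) 1 (SIN_bound t)) as _.
  assert (Rabs (sin t) <= 1) by (apply Rabs_le; apply SIN_bound). nra.
Qed.

Lemma hS_cont k0 t : 0 <= k0 < 1 -> continuous (hS k0) t.
Proof.
  intros Hk. apply (@ex_derive_continuous R_AbsRing R_NormedModule). unfold hS. auto_derive.
  exists (F1 (k0 * sin t)). apply dFs. pose proof (abs_ksin k0 t). lra.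
Qed.

Lemma ex_RInt_hS k0 a b : 0 <= k0 < 1 -> ex_RInt (hS k0) a b.
Proof. intros Hk. apply (@ex_RInt_continuous R_CompleteNormedModule). intros; apply hS_cont; auto. Qed.

Lemma int_term k0 k : is_RInt (fun t => acoef k * (k0 * sin t) ^ k) 0 (PI/2) (ucoef k0 k).
Proof.
  assert (HA : is_RInt (fun t => sin t ^ k) 0 (PI/2) (W k))
    by (apply (@RInt_correct R_CompleteNormedModule); apply ex_RInt_sinpow).
  pose proof (is_RInt_scal _ _ _ (acoef k * k0 ^ k) _ HA) as H.
  eapply is_RInt_ext; [|exact H]. intros x _. simpl. rewrite Rpow_mult_distr. unfold scal; simpl; unfold mult; simpl. ring.
Qed.

Lemma int_partial k0 N : is_RInt (fun t => sum_n (fun k => acoef k * (k0 * sin t) ^ k) N) 0 (PI/2) (sum_n (ucoef k0) N).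
Proof.
  induction N as [|N IH].
  - eapply is_RInt_ext; [|rewrite sum_O; apply int_term]. intros; rewrite sum_O; auto.
  - rewrite sum_Sn. eapply is_RInt_ext; [| apply (is_RInt_plus _ _ _ _ _ _ IH (int_term k0 (S N)))].
    intros; rewrite sum_Sn; auto.
Qed.

Lemma termwise k0 : 0 <= k0 < 1 -> is_series (ucoef k0) (RInt (hS k0) 0 (PI/2)).
Proof.
  intros Hk. set (L := RInt (hS k0) 0 (PI/2)).
  pose proof PI_RGT_0.
  assert (Hb : forall N, Rabs (L - sum_n (ucoef k0) N) <= (PI/2) * (k0 / (1 - k0)) * k0 ^ N).
  { intros N. pose proof (int_partial k0 N) as HP.
    rewrite <- (@is_RInt_unique R_CompleteNormedModule _ _ _ _ HP). unfold L.
    assert (HE: ex_RInt (fun t => sum_n (fun k => acoef k * (k0 * sin t) ^ k) N) 0 (PI/2)) by (eexists; eauto).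
    pose proof (@RInt_minus R_CompleteNormedModule _ _ 0 (PI/2) (ex_RInt_hS k0 0 (PI/2) Hk) HE) as HM.
    change (minus ?a ?b) with (a - b) in HM. rewrite <- HM.
    eapply Rle_trans. apply abs_RInt_le_const with (M := k0 ^ S N / (1 - k0)). lra.
    - apply (@ex_RInt_minus R_CompleteNormedModule). apply ex_RInt_hS; auto. auto.
    - intros t _. unfold hS. apply tail_bound; auto. apply abs_ksin; lra.
    - simpl pow. right. field. lra. }
  assert (Hg : is_lim_seq (fun N => (PI/2) * (k0 / (1 - k0)) * k0 ^ N) 0).
  { replace (Finite 0) with (Rbar_mult (PI/2 * (k0 / (1 - k0))) 0) by (simpl; f_equal; ring).
    apply is_lim_seq_scal_l. apply is_lim_seq_geom. rewrite Rabs_pos_eq; lra. }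
  assert (Hl : is_lim_seq (sum_n (ucoef k0)) L).
  { apply is_lim_seq_le_le with (u := fun N => L + - ((PI/2) * (k0 / (1 - k0)) * k0 ^ N))
      (w := fun N => L + (PI/2) * (k0 / (1 - k0)) * k0 ^ N).
    - intros n. specialize (Hb n). apply Rabs_le_between in Hb. lra.
    - replace (Finite L) with (Finite (L + - 0)) by (f_equal; ring).
      apply is_lim_seq_plus'. apply is_lim_seq_const. apply is_lim_seq_opp in Hg. simpl in Hg.
      exact Hg.
    - replace (Finite L) with (Finite (L + 0)) by (f_equal; ring).
      apply is_lim_seq_plus'. apply is_lim_seq_const. exact Hg. }
  exact Hl.
Qed.

Lemma is_derive_asin y : -1 < y < 1 -> is_derive asin y (1 / sqrt (1 - y²)).
Proof.
  intros H. apply is_derive_Reals. apply (derive_pt_eq_1 _ _ _ (derivable_pt_asin y H)).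
  apply derive_pt_asin.
Qed.

Section Sub.
Variable k0 : R.
Hypothesis Hk : 0 < k0 < 1.

Definition Tm psi := asin (sin psi / k0).
Definition dTm psi := cos psi / k0 * (1 / sqrt (1 - (sin psi / k0)²)).

Lemma dTm_is psi : -1 < sin psi / k0 < 1 -> is_derive Tm psi (dTm psi).
Proof.
  intros H. unfold Tm, dTm.
  eapply is_derive_ext. intros; reflexivity.
  eapply (is_derive_comp asin (fun p => sin p / k0)).
  - apply is_derive_asin; auto.
  - auto_derive. auto. field. lra.
Qed.

Lemma dTm_cont psi : -1 < sin psi / k0 < 1 -> continuous dTm psi.
Proof.
  intros H. apply (@ex_derive_continuous R_AbsRing R_NormedModule). unfold dTm.
  assert (0 < 1 - (sin psi / k0)²).
  { rewrite Rsqr_pow2. assert ((sin psi / k0)^2 < 1) by (simpl; nra). lra. }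
  rewrite Rsqr_pow2 in H0.
  auto_derive. repeat split; try lra. rewrite Rsqr_pow2; lra.
  apply Rgt_not_eq, sqrt_lt_R0. rewrite Rsqr_pow2; lra.
Qed.
End Sub.

Section Main.
Variable alpha : R.
Hypothesis Ha : 0 < alpha < PI / 2.

Let k0 := sin alpha.

Lemma k0_range : 0 < k0 < 1.
Proof.
  unfold k0. pose proof PI_RGT_0. split.
  - apply sin_gt_0; lra.
  - rewrite <- sin_PI2. apply sin_increasing_1; lra.
Qed.

Definition fint psi := sqrt 2 * cos (psi / 3) / sqrt (cos (2 * psi) - cos (2 * alpha)).

Lemma sin_range psi : 0 <= psi < alpha -> 0 <= sin psi / k0 < 1.
Proof.
  intros H. pose proof k0_range. pose proof PI_RGT_0.
  assert (0 <= sin psi) by (apply sin_ge_0; lra).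
  assert (sin psi < k0) by (unfold k0; apply sin_increasing_1; lra).
  split. apply Rmult_le_pos; auto. apply Rlt_le, Rinv_0_lt_compat; lra.
  apply (Rmult_lt_reg_r k0); [lra|]. unfold Rdiv. rewrite Rmult_assoc, Rinv_l by lra. lra.
Qed.

Lemma integrand_eq psi : 0 <= psi < alpha ->
  dTm k0 psi * hS k0 (Tm k0 psi) = fint psi.
Proof.
  intros H. pose proof k0_range as Hk. pose proof PI_RGT_0. pose proof (sin_range psi H) as Hs.
  unfold hS, Tm, dTm, fint.
  rewrite sin_asin by lra.
  replace (k0 * (sin psi / k0)) with (sin psi) by (field; lra).
  assert (Hc : 0 < cos psi) by (apply cos_gt_0; lra).
  assert (HG : Fs (sin psi) = cos (psi / 3) / cos psi).
  { rewrite <- (G_cos psi) by lra. field. lra. }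
  rewrite HG.
  assert (HX : 0 < 1 - (sin psi / k0)²).
  { rewrite Rsqr_pow2. assert ((sin psi / k0)^2 < 1) by (simpl; nra). lra. }
  assert (Hd : cos (2 * psi) - cos (2 * alpha) = 2 * (k0 * k0) * (1 - (sin psi / k0)²)).
  { rewrite !cos_2a_sin. fold k0. unfold Rsqr. field. lra. }
  assert (0 <= k0 * k0) by (apply Rmult_le_pos; lra). rewrite Hd, (sqrt_mult (2 * (k0 * k0)) (1 - (sin psi / k0)²)), (sqrt_mult 2 (k0 * k0)), (sqrt_square k0) by (first [apply Rlt_le; exact HX | lra]).
  assert (Q1 : 0 < sqrt 2) by (apply sqrt_lt_R0; lra).
  assert (Q2 : 0 < sqrt (1 - (sin psi / k0)²)) by (apply sqrt_lt_R0; exact HX).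
  assert (Q3 : 0 < k0) by lra. field. split; [apply Rgt_not_eq; exact Q2|]. split; [apply Rgt_not_eq; exact Q3|]. split; [apply Rgt_not_eq; exact Q1|]. apply Rgt_not_eq; exact Hc.
Qed.

Lemma subst b : 0 < b < alpha -> is_RInt fint 0 b (RInt (hS k0) 0 (Tm k0 b)).
Proof.
  intros Hb. pose proof k0_range as Hk.
  assert (T0 : Tm k0 0 = 0) by (unfold Tm; rewrite sin_0; unfold Rdiv; rewrite Rmult_0_l; apply asin_0).
  assert (Hc : forall x, Rmin 0 b <= x <= Rmax 0 b -> continuous (hS k0) (Tm k0 x))
    by (intros x _; apply hS_cont; lra).
  assert (Hd : forall x, Rmin 0 b <= x <= Rmax 0 b -> is_derive (Tm k0) x (dTm k0 x) /\ continuous (dTm k0) x).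
  { intros x Hx. rewrite Rmin_left, Rmax_right in Hx by lra.
    assert (-1 < sin x / k0 < 1) by (pose proof (sin_range x ltac:(lra)); lra).
    split. apply dTm_is; auto. apply dTm_cont; auto. }
  pose proof (@is_RInt_comp R_CompleteNormedModule (hS k0) (Tm k0) (dTm k0) 0 b Hc Hd) as HI.
  rewrite T0 in HI.
  eapply is_RInt_ext; [| exact HI].
  intros x Hx. rewrite Rmin_left, Rmax_right in Hx by lra.
  change (dTm k0 x * hS k0 (Tm k0 x) = fint x). apply integrand_eq. lra.
Qed.
End Main.

Lemma v_bound v : 0 <= v <= PI / 2 -> v <= 3 * sin v.
Proof.
  intros Hv. pose proof PI_4. pose proof PI_RGT_0.
  pose proof (sin_bound v 0 ltac:(lra) ltac:(lra)) as [H1 _].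
  unfold sin_approx, sin_term in H1. simpl in H1.
  assert (v <= 2) by lra.
  assert (v * v <= 4) by nra.
  nra.
Qed.

Lemma asin_nonneg y : 0 <= y <= 1 -> 0 <= asin y.
Proof.
  intros Hy. destruct (Rle_lt_dec 0 (asin y)) as [h|h]; auto.
  pose proof (asin_bound y). pose proof PI_RGT_0.
  destruct (Req_dec (asin y) (-(PI/2))) as [e|e].
  - assert (sin (asin y) = -1) by (rewrite e, sin_neg, sin_PI2; ring).
    rewrite sin_asin in H1 by lra. lra.
  - assert (sin (asin y) < 0) by (apply sin_lt_0_var; lra).
    rewrite sin_asin in H1 by lra. lra.
Qed.

Lemma Tm_lim alpha : 0 < alpha < PI / 2 ->
  filterlim (Tm (sin alpha)) (at_left alpha) (locally (PI / 2)).
Proof.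
  intros Ha. pose proof (k0_range alpha Ha) as Hk. pose proof PI_RGT_0.
  set (k0 := sin alpha) in *.
  set (g := fun b => sqrt (1 - (sin b / k0)²)).
  assert (Hg0 : g alpha = 0).
  { unfold g. fold k0. replace (k0 / k0) with 1 by (field; lra). rewrite Rsqr_1, Rminus_diag. apply sqrt_0. }
  assert (Hgc : continuous g alpha).
  { unfold g. apply (continuous_comp (fun b => 1 - (sin b / k0)²) sqrt).
    - apply (@ex_derive_continuous R_AbsRing R_NormedModule). auto_derive. auto.
    - apply continuous_sqrt. }
  intros P [eps He].
  assert (Hl : locally alpha (fun b => Rabs (g b) < eps / 3)).
  { assert (Hep : 0 < eps / 3) by (pose proof (cond_pos eps); lra).
    apply (Hgc (fun z => Rabs z < eps / 3)). rewrite Hg0. exists (mkposreal _ Hep).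
    intros y Hy. change (Rabs (y - 0) < eps / 3) in Hy. rewrite Rminus_0_r in Hy. exact Hy. }
  assert (Hpos : locally alpha (fun b => 0 < b)).
  { exists (mkposreal _ (proj1 Ha)). intros y Hy. change (Rabs (y - alpha) < alpha) in Hy.
    apply Rabs_def2 in Hy. lra. }
  unfold filtermap, at_left, within.
  apply (filter_imp (fun b => Rabs (g b) < eps / 3 /\ 0 < b)); [| apply filter_and; auto].
  intros b [Hb1 Hb2] Hb3. apply He.
  change (Rabs (Tm k0 b - PI / 2) < eps).
  pose proof (sin_range alpha Ha b ltac:(lra)) as Hs. fold k0 in Hs.
  unfold Tm. set (y := sin b / k0) in *.
  pose proof (asin_bound y). pose proof (asin_nonneg y ltac:(lra)).
  assert (Hsv : sin (PI / 2 - asin y) = g b).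
  { rewrite sin_shift, cos_asin by lra. reflexivity. }
  pose proof (v_bound (PI / 2 - asin y) ltac:(lra)) as Hv.
  rewrite Hsv in Hv.
  rewrite Rabs_left1 by lra.
  assert (g b <= Rabs (g b)) by apply RRle_abs.
  lra.
Qed.

Theorem theorem3 (alpha : R) (Ha : 0 < alpha < PI / 2) :
  is_RInt_gen
    (fun psi => sqrt 2 * cos (psi / 3) / sqrt (cos (2 * psi) - cos (2 * alpha)))
    (at_point 0) (at_left alpha)
    (PI / 2 * hyp2F1 (1/3) (2/3) 1 ((sin alpha) ^ 2)).
Proof.
  pose proof (k0_range alpha Ha) as Hk.
  rewrite (series_conv (sin alpha) _ (termwise (sin alpha) ltac:(lra))).
  set (I := fun u => RInt (hS (sin alpha)) 0 u).
  assert (HIc : filterlim (fun b => I (Tm (sin alpha) b)) (at_left alpha) (locally (I (PI/2)))).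
  { apply filterlim_comp with (locally (PI/2)); [apply Tm_lim; auto |].
    apply (@continuous_RInt_1 R_NormedModule (hS (sin alpha)) 0 (PI/2) I).
    apply filter_forall. intros x. apply (@RInt_correct R_CompleteNormedModule). apply ex_RInt_hS; lra. }
  unfold is_RInt_gen, filterlimi, filter_le, filtermapi. intros P HP.
  specialize (HIc P HP). unfold filtermap, at_left, within in HIc.
  assert (Hpos : locally alpha (fun b => 0 < b)).
  { exists (mkposreal _ (proj1 Ha)). intros y Hy. change (Rabs (y - alpha) < alpha) in Hy.
    apply Rabs_def2 in Hy. lra. }
  apply Filter_prod with (fun a => a = 0) (fun b => 0 < b < alpha /\ P (I (Tm (sin alpha) b))).
  - reflexivity.
  - unfold at_left, within.
    apply (filter_imp (fun b => (b < alpha -> P (I (Tm (sin alpha) b))) /\ 0 < b)); [| apply filter_and; auto].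
    intros b [H1 H2] H3. auto.
  - intros a b -> [Hb HPb]. simpl. exists (I (Tm (sin alpha) b)). split; auto.
    apply (subst alpha Ha b Hb).
Qed.
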